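(* Consider the hardware trojan detection game specified in the context. Under EUT there exists a fine value $F^v_{\mathrm{EUT}}$, and under PT there exists a fine value $F^v_{\mathrm{PT}}$, such that when $F$ equals that value, at the mixed-strategy Nash equilibrium neither the attacker nor the defender wins. That is, the equilibrium expected utilities of both players are equal to $0$.
   Context: <p><b>Players and strategies.</b> There are two players, an attacker $a$ and a defender $d$. The trojan types are $\mathcal{T}=\{A,B,C,D\}$, with damages $V_A=1$, $V_B=2$, $V_C=4$, $V_D=12$. Every type has the same fine $F$.</p> <p>The attacker's pure strategy set is $\mathcal{S}_a=\mathcal{T}$. The defender's pure strategy set $\mathcal{S}_d=\{AB,AC,AD,BC,BD,CD\}$ consists of the 2-element subsets of $\mathcal{T}$.</p> <p><b>Payoffs.</b> $u_d(s_d,s_a)=F$ if $s_a\in s_d$, and $u_d(s_d,s_a)=-V_{s_a}$ otherwise. The game is zero-sum: $u_a=-u_d$.</p> <p>Mixed strategies are probability vectors $\boldsymbol{p}_d$ on $\mathcal{S}_d$ and $\boldsymbol{p}_a$ on $\mathcal{S}_a$.</p> <p><b>EUT utility.</b> $U_i^{\mathrm{EUT}}(\boldsymbol{p}_d,\boldsymbol{p}_a)=\sum_{s_d,s_a}p_d(s_d)p_a(s_a)u_i(s_d,s_a)$.</p> <p><b>PT utility.</b> Each player $i$ has a parameter $\alpha_i\in(0,1]$ and the weighting function $w_i(p)=\exp(-(-\ln p)^{\alpha_i})$, with $w_i(0)=0$. For player $i$ with opponent $j$, $U_i^{\mathrm{PT}}(\boldsymbol{p}_i,\boldsymbol{p}_j)=\sum_{s_i,s_j}p_i(s_i)\,w_i(p_j(s_j))\,u_i(s_i,s_j)$.</p>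 <p><b>MSNE.</b> A mixed-strategy Nash equilibrium is a profile from which neither player can increase its utility ($U^{\mathrm{EUT}}$ or $U^{\mathrm{PT}}$, respectively) by unilateral deviation.</p> <p><b>Winning.</b> A player ''wins'' if its equilibrium expected utility is positive.</p> *)

(* Defs.v *)
From HB Require Import structures.
From mathcomp Require Import all_boot all_order all_algebra.
From mathcomp Require Import all_classical all_reals all_analysis.
Set Implicit Arguments. Unset Strict Implicit. Unset Printing Implicit Defensive.
Import Order.TTheory GRing.Theory Num.Theory.
Local Open Scope ring_scope.

(* Trojan types A,B,C,D are the ordinals 0,1,2,3 of 'I_4. *)
Definition Trojan := 'I_4.

Definition dmg {R : realType} (t : Trojan) : R :=
  [:: 1; 2; 4; 12]`_(nat_of_ord t).

Definition DefStrat := {A : {set Trojan} | #|A| == 2%N}.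

Definition u_d {R : realType} (F : R) (sd : DefStrat) (sa : Trojan) : R :=
  if sa \in val sd then F else - dmg sa.
Definition u_a {R : realType} (F : R) (sd : DefStrat) (sa : Trojan) : R :=
  - u_d F sd sa.

Definition is_mixed {R : realType} (T : finType) (p : T -> R) : Prop :=
  (forall x, 0 <= p x) /\ \sum_(x : T) p x = 1.

Definition UEUT_d {R : realType} (F : R) (pd : DefStrat -> R) (pa : Trojan -> R) : R :=
  \sum_(sd : DefStrat) \sum_(sa : Trojan) pd sd * pa sa * u_d F sd sa.
Definition UEUT_a {R : realType} (F : R) (pd : DefStrat -> R) (pa : Trojan -> R) : R :=
  \sum_(sd : DefStrat) \sum_(sa : Trojan) pd sd * pa sa * u_a F sd sa.

Definition wPT {R : realType} (alpha p : R) : R :=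
  if p == 0 then 0 else expR (- ((- ln p) `^ alpha)).

Definition UPT_d {R : realType} (alpha_d F : R) (pd : DefStrat -> R) (pa : Trojan -> R) : R :=
  \sum_(sd : DefStrat) \sum_(sa : Trojan) pd sd * wPT alpha_d (pa sa) * u_d F sd sa.
Definition UPT_a {R : realType} (alpha_a F : R) (pd : DefStrat -> R) (pa : Trojan -> R) : R :=
  \sum_(sa : Trojan) \sum_(sd : DefStrat) pa sa * wPT alpha_a (pd sd) * u_a F sd sa.

Definition MSNE {R : realType}
    (Ud Ua : (DefStrat -> R) -> (Trojan -> R) -> R)
    (pd : DefStrat -> R) (pa : Trojan -> R) : Prop :=
  [/\ is_mixed pd, is_mixed pa,
      (forall pd' : DefStrat -> R, is_mixed pd' -> Ud pd' pa <= Ud pd pa) &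
      (forall pa' : Trojan -> R, is_mixed pa' -> Ua pd pa' <= Ua pd pa)].

(* Main.v *)
Require Import Defs.
From HB Require Import structures.
From mathcomp Require Import all_boot all_order all_algebra.
From mathcomp Require Import all_classical all_reals all_analysis.
From mathcomp Require Import ring lra.
Import Order.TTheory GRing.Theory Num.Theory.
Import numFieldNormedType.Exports.
Local Open Scope classical_set_scope.
Local Open Scope ring_scope.

Definition tm {R : realType} (b m : R) : R := expR (- expR (b * ln (- ln m))).

Lemma tm_cont {R : realType} (b r k : R) : 0 < k * r < 1 -> {for k, continuous (fun x : R => tm b (x * r))}.
Proof.
move=> /andP[kr0 kr1].
have h1 : {for k, continuous (fun x : R => x * r)}.
  by apply: cvgMr_tmp; exact: cvg_id.
have h2 := continuous_ln kr0.
have l0 : 0 < - ln (k * r) by rewrite oppr_gt0 ln_lt0 // kr0 kr1.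
have h3 := continuous_ln l0.
have h4 : {for k, continuous (fun x : R => - ln (x * r))}.
  by apply: continuousN; exact: (continuous_comp h1 h2).
have h5 : {for k, continuous (fun x : R => b * ln (- ln (x * r)))}.
  by apply: cvgMl_tmp; exact: (continuous_comp h4 h3).
have h6 : {for k, continuous (fun x : R => - expR (b * ln (- ln (x * r))))}.
  apply: continuousN. exact: (continuous_comp h5 (@continuous_expR R (b * ln (- ln (k * r))))).
exact: (continuous_comp h6 (@continuous_expR R _)).
Qed.

Lemma G_cont {R : realType} (b : R) (T : finType) (r : T -> R) (k : R) :
  (forall l, 0 < r l -> 0 < k * r l < 1) ->
  {for k, continuous (fun x : R => \sum_l (if 0 < r l then tm b (x * r l) else 0))}.
Proof.
move=> H.
apply: (@cvg_big _ _ +%R 0 xpredT add_continuous _ (nbhs k)) => l _.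
have [rl|rl] := boolP (0 < r l).
  exact: (@tm_cont R b (r l) k (H l rl)).
exact: cvg_cst.
Qed.

Lemma tm_le {R : realType} (b m : R) : 1 <= b -> 0 < m <= expR (-1) -> tm b m <= m.
Proof.
move=> b1 /andP[m0 me].
have L1 : 1 <= - ln m.
  by rewrite lerNr -(expRK (-1)) ler_ln // posrE expR_gt0.
have lL : 0 <= ln (- ln m) by apply: ln_ge0.
rewrite /tm -{2}(lnK m0) ler_expR lerNl.
rewrite -{1}(lnK (lt_le_trans ltr01 L1)) ler_expR.
by rewrite -[X in X <= _]mul1r ler_wpM2r.
Qed.

Lemma tm_ge {R : realType} (b m : R) : 1 <= b -> expR (-1) <= m < 1 -> m <= tm b m.
Proof.
move=> b1 /andP[me m1].
have m0 : 0 < m by apply: lt_le_trans me; exact: expR_gt0.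
have L0 : 0 < - ln m by rewrite oppr_gt0 ln_lt0 // m0 m1.
have L1 : - ln m <= 1.
  by rewrite lerNl -(expRK (-1)) ler_ln // posrE expR_gt0.
have lL : ln (- ln m) <= 0 by apply: ln_le0.
rewrite /tm -{1}(lnK m0) ler_expR lerNr.
rewrite -{2}(lnK L0) ler_expR.
by rewrite -[X in _ <= X]mul1r ler_wnM2r.
Qed.

Lemma tm_w {R : realType} (a m : R) : 0 < a -> 0 < m < 1 -> wPT a (tm a^-1 m) = m.
Proof.
move=> a0 /andP[m0 m1].
have L0 : 0 < - ln m by rewrite oppr_gt0 ln_lt0 // m0 m1.
rewrite /wPT /tm gt_eqF ?expR_gt0 // expRK opprK /powR gt_eqF ?expR_gt0 //.
rewrite expRK mulrA mulfV ?gt_eqF // mul1r (lnK L0) opprK (lnK m0) //.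
Qed.

Lemma expR1_ge {R : realType} : 32/15 <= expR (1:R).
Proof.
have h : expR (1:R) = expR (1/2) * expR (1/2) by rewrite -expRD; congr expR; field.
have h2 : 1 + 1/2 <= expR (1/2 : R) by exact: expR_ge1Dx.
rewrite h; apply: le_trans (ler_pM _ _ h2 h2); lra.
Qed.

Lemma expRm1_le {R : realType} : expR (-1) <= 15/32 :> R.
Proof.
rewrite expRN -[X in _ <= X]invrK lef_pV2 ?posrE ?expR_gt0 //.
have -> : (15/32:R)^-1 = 32/15 by field.
exact: expR1_ge.
Qed.

Lemma k1lt1_lem {R : realType} : (15/16 : R) < 1. Proof. lra. Qed.

Lemma sum_ge2 {R : realType} (T : finType) (F : T -> R) i j : i != j -> (forall l, 0 <= F l) ->
  F i + F j <= \sum_l F l.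
Proof.
move=> ij F0; rewrite (bigD1 i) //= (bigD1 j) /=; last by rewrite eq_sym.
by rewrite addrA lerDl sumr_ge0.
Qed.

Definition Gf {R : realType} {T : finType} (b : R) (r : T -> R) (k : R) : R :=
  \sum_l (if 0 < r l then tm b (k * r l) else 0).

Lemma prelec_mix {R : realType} (a : R) (T : finType) (r : T -> R) :
  0 < a <= 1 -> (forall i, 0 <= r i <= 1) ->
  (exists i j, [/\ i != j, r i = 1 & 1/2 <= r j]) ->
  exists (p : T -> R) (k : R), is_mixed p /\ 0 < k /\ forall i, wPT a (p i) = k * r i.
Proof.
move=> /andP[a0 a1] r01 [i [j [ij ri rj]]].
set b := a^-1.
have b1 : 1 <= b by rewrite /b invf_ge1.
have nT : (0 < #|T|)%N by apply/card_gt0P; exists i.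
have nTR : 1 <= (#|T|%:R : R) by rewrite ler1n.
set k0 : R := expR (-1) / (#|T|%:R : R).
have k00 : 0 < k0 by rewrite divr_gt0 ?expR_gt0 // ltr0n.
have k0e : k0 <= expR (-1).
  by rewrite /k0 ler_pdivrMr ?ltr0n // ler_peMr // expR_ge0.
have em1 := @expRm1_le R.
have e1 : expR (-1) <= 1 :> R by rewrite expR_le1; lra.
set k1 : R := 15/16.
have k1lt1 : k1 < 1 by exact: k1lt1_lem.
have k01 : k0 <= k1 by apply: (le_trans k0e); apply: (le_trans em1); rewrite /k1; lra.
have Gk0 : Gf b r k0 <= 1.
  rewrite /Gf; apply: (@le_trans _ _ (\sum_(l : T) k0)).
    apply: ler_sum => l _; case: ifP => rl; last exact: ltW.
    have := r01 l => /andP[_ rl1].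
    apply: (le_trans (@tm_le R b (k0 * r l) b1 _)).
      by rewrite mulr_gt0 //= (le_trans _ k0e) // ler_piMr // ltW.
    by rewrite ler_piMr // ltW.
  by rewrite sumr_const -mulr_natr /k0 mulfVK ?gt_eqF ?ltr0n.
have Gk1 : 1 <= Gf b r k1.
  rewrite /Gf; apply: (le_trans _ (@sum_ge2 R T (fun l => if 0 < r l then tm b (k1 * r l) else 0) i j ij _)).
    rewrite ri ltr01.
    have rj0 : 0 < r j by apply: lt_le_trans rj; lra.
    rewrite rj0.
    have := r01 j => /andP[_ rj1].
    have A1 : k1 * 1 <= tm b (k1 * 1).
      apply: (@tm_ge R b (k1 * 1) b1); rewrite /k1 mulr1; apply/andP; split.
        by apply: (le_trans em1); lra.
      lra.
    have A2 : k1 * r j <= tm b (k1 * r j).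
      apply: (@tm_ge R b (k1 * r j) b1); rewrite /k1; apply/andP; split.
        by apply: (le_trans em1); clear -rj; lra.
      clear -rj1; lra.
    rewrite /=; move: A1 A2.
    set u := tm b (_ * 1); set v := tm b (_ * r j) => A1 A2.
    move: u v A1 A2 rj; rewrite /k1 => u v A1 A2 rj'. clear -A1 A2 rj'. lra.
  by move=> l; case: ifP => _ //; exact: expR_ge0.
have Gc : {within `[k0, k1], continuous (Gf b r)}.
  apply: continuous_in_subspaceT => k kI.
  have /andP[kk0 kk1] : k0 <= k <= k1 by move: kI; rewrite inE /= in_itv.
  rewrite /Gf; apply: G_cont => l rl; have := r01 l => /andP[_ rl1].
  apply/andP; split; first by rewrite mulr_gt0 // (lt_le_trans k00 kk0).
  apply: (@le_lt_trans _ _ k); first by rewrite ler_piMr // (le_trans (ltW k00) kk0).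
  exact: (le_lt_trans kk1 k1lt1).
have mm : Num.min (Gf b r k0) (Gf b r k1) <= 1 <= Num.max (Gf b r k0) (Gf b r k1).
  apply/andP; split; [rewrite ge_min; apply/orP; left; exact: Gk0 | rewrite le_max; apply/orP; right; exact: Gk1].
have [c cI Gc1] := IVT k01 Gc mm.
move: cI; rewrite in_itv /= => /andP[ck0 ck1].
have c0 : 0 < c by apply: lt_le_trans ck0.
exists (fun l => if 0 < r l then tm b (c * r l) else 0), c.
split; [split|split] => //.
- by move=> l; case: ifP => _ //; exact: expR_ge0.
- move=> l; case: ifPn => rl.
    have := r01 l => /andP[_ rl1].
    apply: tm_w => //; rewrite mulr_gt0 //=.
    apply: (@le_lt_trans _ _ c); first by rewrite ler_piMr // ltW.
    exact: (le_lt_trans ck1 k1lt1).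
  have : r l = 0 by have := r01 l => /andP[rl0 _]; apply/eqP; rewrite eq_le rl0 andbT leNgt.
  by move=> ->; rewrite mulr0 /wPT eqxx.
Qed.

Definition tA : Trojan := @Ordinal 4 0 isT.
Definition tB : Trojan := @Ordinal 4 1 isT.
Definition tC : Trojan := @Ordinal 4 2 isT.
Definition tD : Trojan := @Ordinal 4 3 isT.

Lemma sumT4 (R : realType) (f : Trojan -> R) : \sum_(t : Trojan) f t = f tA + f tB + f tC + f tD.
Proof.
rewrite /Trojan !big_ord_recl big_ord0 addr0 !addrA.
by congr (_ + _ + _ + _); apply: congr1; apply: val_inj.
Qed.

Lemma trojan_cases (P : Trojan -> Prop) : P tA -> P tB -> P tC -> P tD -> forall t, P t.
Proof.
move=> hA hB hC hD [[|[|[|[|n]]]] hn] //.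
- by have -> : Ordinal hn = tA by apply: val_inj.
- by have -> : Ordinal hn = tB by apply: val_inj.
- by have -> : Ordinal hn = tC by apply: val_inj.
- by have -> : Ordinal hn = tD by apply: val_inj.
Qed.

Lemma dmgE (R : realType) : [/\ dmg tA = 1 :> R, dmg tB = 2 :> R, dmg tC = 4 :> R & dmg tD = 12 :> R].
Proof. by []. Qed.

Lemma cont_frac (R : realType) (V x : R) : 0 < x + V -> {for x, continuous (fun y : R => V / (y + V))}.
Proof.
move=> h; apply: cvgMl_tmp; apply: (@continuousV _ _ (fun y : R => y + V) x); first by rewrite gt_eqF.
apply: cvgD; [exact: cvg_id | exact: cvg_cst].
Qed.

Lemma F_exists (R : realType) : exists F : R, 3 <= F <= 7/2 /\ \sum_(t : Trojan) dmg t / (F + dmg t) = 2.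
Proof.
pose g (x : R) := 1/(x+1) + 2/(x+2) + 4/(x+4) + 12/(x+12).
have gc : {within `[3, 7/2], continuous g}.
  apply: continuous_in_subspaceT => x xI.
  have /andP[x3 _] : 3 <= x <= 7/2 by move: xI; rewrite inE /= in_itv.
  have p V : 0 <= V -> 0 < x + V by move=> V0; lra.
  apply: cvgD; [apply: cvgD; [apply: cvgD|]|]; apply: cont_frac; apply: p; lra.
have g3 : g 3 = 1/4 + 2/5 + 4/7 + 12/15 by rewrite /g; field.
have g4 : g (7/2) = 2/9 + 4/11 + 8/15 + 24/31 by rewrite /g; field.
have ab : (3:R) <= 7/2 by lra.
have mm : Num.min (g 3) (g (7/2)) <= 2 <= Num.max (g 3) (g (7/2)).
  by apply/andP; split; [rewrite ge_min g4 | rewrite le_max g3]; apply/orP; [right|left]; lra.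
have [F FI gF] := IVT ab gc mm.
exists F; split; first by move: FI; rewrite in_itv.
by rewrite sumT4 /dmg /=.
Qed.

Lemma cAD : #|[set tA; tD]%SET| == 2%N. Proof. by rewrite cards2. Qed.
Lemma cBC : #|[set tB; tC]%SET| == 2%N. Proof. by rewrite cards2. Qed.
Lemma cBD : #|[set tB; tD]%SET| == 2%N. Proof. by rewrite cards2. Qed.
Lemma cCD : #|[set tC; tD]%SET| == 2%N. Proof. by rewrite cards2. Qed.
Definition PAD : DefStrat := exist _ [set tA; tD]%SET cAD.
Definition PBC : DefStrat := exist _ [set tB; tC]%SET cBC.
Definition PBD : DefStrat := exist _ [set tB; tD]%SET cBD.
Definition PCD : DefStrat := exist _ [set tC; tD]%SET cCD.

Lemma memE : [/\ tA \in val PAD, tB \notin val PAD, tC \notin val PAD & tD \in val PAD].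
Proof. by rewrite /= !inE. Qed.

Lemma Pneq : (PAD != PBC) && (PAD != PBD) && (PAD != PCD) && (PBC != PBD) && (PBC != PCD) && (PBD != PCD).
Proof.
repeat (apply/andP; split); apply/negP => /eqP E.
- by have := congr1 (fun s : DefStrat => tA \in val s) E; rewrite /= !inE.
- by have := congr1 (fun s : DefStrat => tA \in val s) E; rewrite /= !inE.
- by have := congr1 (fun s : DefStrat => tA \in val s) E; rewrite /= !inE.
- by have := congr1 (fun s : DefStrat => tC \in val s) E; rewrite /= !inE.
- by have := congr1 (fun s : DefStrat => tB \in val s) E; rewrite /= !inE.
- by have := congr1 (fun s : DefStrat => tB \in val s) E; rewrite /= !inE.
Qed.


Lemma dmg_gt0 {R : realType} (t : Trojan) : 0 < dmg t :> R.
Proof. by move: t; apply: trojan_cases; rewrite /dmg /=; lra. Qed.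

Lemma sum_ind {R : realType} (P : DefStrat) (f : DefStrat -> R) :
  \sum_(sd : DefStrat) (sd == P)%:R * f sd = f P.
Proof.
rewrite (bigD1 P) //= eqxx mul1r big1 ?addr0 // => sd /negbTE ->.
by rewrite mul0r.
Qed.

Definition zfg {R : realType} (P1 P2 P3 P4 : DefStrat) (w1 w2 w3 w4 : R) (sd : DefStrat) : R :=
  (sd == P1)%:R * w1 + (sd == P2)%:R * w2 + (sd == P3)%:R * w3 + (sd == P4)%:R * w4.

Lemma zsum_gen {R : realType} P1 P2 P3 P4 (w1 w2 w3 w4 : R) (f : DefStrat -> R) :
  \sum_(sd : DefStrat) zfg P1 P2 P3 P4 w1 w2 w3 w4 sd * f sd =
  w1 * f P1 + w2 * f P2 + w3 * f P3 + w4 * f P4.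
Proof.
rewrite (eq_bigr (fun sd => (sd == P1)%:R * (w1 * f sd) + (sd == P2)%:R * (w2 * f sd)
   + (sd == P3)%:R * (w3 * f sd) + (sd == P4)%:R * (w4 * f sd))); last first.
  by move=> sd _; rewrite /zfg !mulrDl -!mulrA.
by rewrite !big_split /= !sum_ind.
Qed.

Lemma zf_cases_gen {R : realType} P1 P2 P3 P4 (w1 w2 w3 w4 : R) sd :
  (P1 != P2) && (P1 != P3) && (P1 != P4) && (P2 != P3) && (P2 != P4) && (P3 != P4) ->
  zfg P1 P2 P3 P4 w1 w2 w3 w4 sd = w1 \/ zfg P1 P2 P3 P4 w1 w2 w3 w4 sd = w2 \/
  zfg P1 P2 P3 P4 w1 w2 w3 w4 sd = w3 \/ zfg P1 P2 P3 P4 w1 w2 w3 w4 sd = w4 \/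
  zfg P1 P2 P3 P4 w1 w2 w3 w4 sd = 0.
Proof.
move=> /andP[/andP[/andP[/andP[/andP[n12 n13] n14] n23] n24] n34].
have n21 : P2 != P1 by rewrite eq_sym.
have n31 : P3 != P1 by rewrite eq_sym.
have n41 : P4 != P1 by rewrite eq_sym.
have n32 : P3 != P2 by rewrite eq_sym.
have n42 : P4 != P2 by rewrite eq_sym.
have n43 : P4 != P3 by rewrite eq_sym.
rewrite /zfg.
have [E1|h1] := eqVneq sd P1.
  by subst sd; left; rewrite ?eqxx ?(negbTE n12) ?(negbTE n13) ?(negbTE n14) /=; ring.
have [E2|h2] := eqVneq sd P2.
  by subst sd; right; left; rewrite ?eqxx ?(negbTE n21) ?(negbTE n23) ?(negbTE n24) /=; ring.
have [E3|h3] := eqVneq sd P3.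
  by subst sd; right; right; left; rewrite ?eqxx ?(negbTE n31) ?(negbTE n32) ?(negbTE n34) /=; ring.
have [E4|h4] := eqVneq sd P4.
  by subst sd; right; right; right; left; rewrite ?eqxx ?(negbTE n41) ?(negbTE n42) ?(negbTE n43) /=; ring.
by right; right; right; right; rewrite ?(negbTE h1) ?(negbTE h2) ?(negbTE h3) ?(negbTE h4) /=; ring.
Qed.

Lemma zfg_P4 {R : realType} P1 P2 P3 P4 (w1 w2 w3 w4 : R) :
  (P1 != P4) && (P2 != P4) && (P3 != P4) -> zfg P1 P2 P3 P4 w1 w2 w3 w4 P4 = w4.
Proof.
move=> /andP[/andP[n14 n24] n34].
rewrite /zfg eqxx eq_sym (negbTE n14) eq_sym (negbTE n24) eq_sym (negbTE n34) /=; ring.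
Qed.

Lemma zfg_P1 {R : realType} P1 P2 P3 P4 (w1 w2 w3 w4 : R) :
  (P1 != P2) && (P1 != P3) && (P1 != P4) -> zfg P1 P2 P3 P4 w1 w2 w3 w4 P1 = w1.
Proof.
move=> /andP[/andP[n12 n13] n14].
rewrite /zfg eqxx (negbTE n12) (negbTE n13) (negbTE n14) /=; ring.
Qed.

Definition zf {R : realType} := @zfg R PAD PBC PBD PCD.

Lemma zsum {R : realType} (w1 w2 w3 w4 : R) (f : DefStrat -> R) :
  \sum_(sd : DefStrat) zf w1 w2 w3 w4 sd * f sd =
  w1 * f PAD + w2 * f PBC + w3 * f PBD + w4 * f PCD.
Proof. exact: zsum_gen. Qed.

Lemma zf_cases {R : realType} (w1 w2 w3 w4 : R) sd :
  zf w1 w2 w3 w4 sd = w1 \/ zf w1 w2 w3 w4 sd = w2 \/ zf w1 w2 w3 w4 sd = w3 \/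
      zf w1 w2 w3 w4 sd = w4 \/ zf w1 w2 w3 w4 sd = 0.
Proof. exact: (zf_cases_gen PAD PBC PBD PCD w1 w2 w3 w4 sd Pneq). Qed.

Lemma zf_PCD {R : realType} (w1 w2 w3 w4 : R) : zf w1 w2 w3 w4 PCD = w4.
Proof.
have /andP[/andP[/andP[/andP[/andP[n12 n13] n14] n23] n24] n34] := Pneq.
by apply: zfg_P4; rewrite n14 n24 n34.
Qed.

Lemma zf_PAD {R : realType} (w1 w2 w3 w4 : R) : zf w1 w2 w3 w4 PAD = w1.
Proof.
have /andP[/andP[/andP[/andP[/andP[n12 n13] n14] n23] n24] n34] := Pneq.
by apply: zfg_P1; rewrite n12 n13 n14.
Qed.

Lemma ud_split {R : realType} (F : R) sd t :
  u_d F sd t = (t \in val sd)%:R * (F + dmg t) - dmg t.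
Proof. by rewrite /u_d; case: (t \in val sd); rewrite ?mul1r ?mul0r ?addrK ?sub0r. Qed.

Lemma card_sum {R : realType} (sd : DefStrat) :
  \sum_(t : Trojan) (t \in val sd)%:R = 2 :> R.
Proof.
rewrite (bigID (fun t => t \in val sd)) /= [X in _ + X]big1 ?addr0; last first.
  by move=> t /negbTE ->.
rewrite (eq_bigr (fun=> 1)); last by move=> t ->.
by rewrite sumr_const (eqP (valP sd)).
Qed.

Lemma K1 {R : realType} (F : R) : 0 < F ->
  \sum_(t : Trojan) dmg t / (F + dmg t) = 2 ->
  forall sd, \sum_(t : Trojan) (F + dmg t)^-1 * u_d F sd t = 0.
Proof.
move=> F0 hg sd.
rewrite (eq_bigr (fun t => (t \in val sd)%:R - dmg t / (F + dmg t))); last first.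
  move=> t _; have hd : F + dmg t != 0 by rewrite gt_eqF // addr_gt0 // dmg_gt0.
  by rewrite ud_split mulrBr mulrCA mulVf // mulr1 [_^-1 * _]mulrC.
by rewrite sumrB card_sum hg subrr.
Qed.

Lemma L_d {R : realType} (F : R) (x : Trojan -> R) :
  (forall sd, \sum_(t : Trojan) x t * u_d F sd t = 0) ->
  forall pd : DefStrat -> R,
  \sum_(sd : DefStrat) \sum_(t : Trojan) pd sd * x t * u_d F sd t = 0.
Proof.
move=> H pd; apply: big1 => sd _.
rewrite (eq_bigr (fun t => pd sd * (x t * u_d F sd t))); last by move=> t _; rewrite mulrA.
by rewrite -mulr_sumr H mulr0.
Qed.

Lemma L_a {R : realType} (F : R) (y : DefStrat -> R) :
  (forall t, \sum_(sd : DefStrat) y sd * u_d F sd t = 0) ->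
  forall pa : Trojan -> R,
  \sum_(sd : DefStrat) \sum_(t : Trojan) y sd * pa t * u_d F sd t = 0.
Proof.
move=> H pa; rewrite exchange_big /=; apply: big1 => t _.
rewrite (eq_bigr (fun sd => pa t * (y sd * u_d F sd t))); last first.
  by move=> sd _; rewrite mulrA [y sd * pa t]mulrC.
by rewrite -mulr_sumr H mulr0.
Qed.

Lemma UEUT_aE {R : realType} (F : R) pd pa : UEUT_a F pd pa = - UEUT_d F pd pa.
Proof.
rewrite /UEUT_a /UEUT_d -sumrN.
rewrite (eq_bigr (fun sd => - \sum_(t : Trojan) pd sd * pa t * u_d F sd t)) //.
move=> sd _; rewrite -sumrN.
by rewrite (eq_bigr (fun t => - (pd sd * pa t * u_d F sd t))) // => t _; rewrite /u_a mulrN.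
Qed.

Lemma L_a' {R : realType} (F : R) (y : DefStrat -> R) :
  (forall t, \sum_(sd : DefStrat) y sd * u_d F sd t = 0) ->
  forall pa : Trojan -> R,
  \sum_(t : Trojan) \sum_(sd : DefStrat) pa t * y sd * u_a F sd t = 0.
Proof.
move=> H pa; apply: big1 => t _.
rewrite (eq_bigr (fun sd => - (pa t * (y sd * u_d F sd t)))); last first.
  by move=> sd _; rewrite /u_a mulrN mulrA.
by rewrite sumrN -mulr_sumr H mulr0 oppr0.
Qed.

Lemma K2 {R : realType} (F a b c d : R) : a * (F + 1) = 1 -> b * (F + 2) = 2 ->
  c * (F + 4) = 4 -> d * (F + 12) = 12 -> a + b + c + d = 2 ->
  forall t, \sum_(sd : DefStrat) zf a (1 - d) ((b + d - a - c) / 2) ((c + d - a - b) / 2) sd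
     * u_d F sd t = 0.
Proof.
move=> ea eb ec ed s t; rewrite zsum.
have sF : F * (a + b + c + d) = F * 2 by rewrite s.
by move: t; apply: trojan_cases; rewrite /u_d /= !inE /= /dmg /=; nra.
Qed.

Theorem theorem3 (R : realType) :
  (exists F_EUT : R, 0 < F_EUT /\
     (exists pd pa, MSNE (UEUT_d F_EUT) (UEUT_a F_EUT) pd pa) /\
     (forall pd pa, MSNE (UEUT_d F_EUT) (UEUT_a F_EUT) pd pa ->
        UEUT_d F_EUT pd pa = 0 /\ UEUT_a F_EUT pd pa = 0))
  /\
  (forall alpha_d alpha_a : R,
     0 < alpha_d <= 1 -> 0 < alpha_a <= 1 ->
     exists F_PT : R, 0 < F_PT /\
       exists pd pa, MSNE (UPT_d alpha_d F_PT) (UPT_a alpha_a F_PT) pd pa /\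
         UPT_d alpha_d F_PT pd pa = 0 /\ UPT_a alpha_a F_PT pd pa = 0).
Proof.
have [F [/andP[F3 F4] hg]] := F_exists R.
have F0 : 0 < F by lra.
have K1h := @K1 R F F0 hg.
rewrite sumT4 /dmg /= in hg.
set a := 1 / (F + 1) in hg.
set b := 2 / (F + 2) in hg.
set c := 4 / (F + 4) in hg.
set d := 12 / (F + 12) in hg.
have ea : a * (F + 1) = 1 by rewrite /a mul1r mulVf // gt_eqF //; lra.
have eb : b * (F + 2) = 2 by rewrite /b -mulrA mulVf ?mulr1 // gt_eqF //; lra.
have ec : c * (F + 4) = 4 by rewrite /c -mulrA mulVf ?mulr1 // gt_eqF //; lra.
have ed : d * (F + 12) = 12 by rewrite /d -mulrA mulVf ?mulr1 // gt_eqF //; lra.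
have a1 : 2/9 <= a <= 1/4 by apply/andP; split; nra.
have b1 : 4/11 <= b <= 2/5 by apply/andP; split; nra.
have c1 : 8/15 <= c <= 4/7 by apply/andP; split; nra.
have d1 : 24/31 <= d <= 4/5 by apply/andP; split; nra.
set w1 := a.
set w2 := 1 - d.
set w3 := (b + d - a - c) / 2.
set w4 := (c + d - a - b) / 2.
have K2h := @K2 R F a b c d ea eb ec ed hg.
rewrite -/w2 -/w3 -/w4 in K2h.
set z := zf w1 w2 w3 w4.
have w4p : 0 < w4 by rewrite /w4; lra.
have zpos : forall sd, 0 <= z sd.
  move=> sd; rewrite /z; case: (zf_cases w1 w2 w3 w4 sd) => [->|[->|[->|[->|->]]]]; rewrite /w1 /w2 /w3 /w4; lra.
have zle : forall sd, z sd <= w4.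
  move=> sd; rewrite /z; case: (zf_cases w1 w2 w3 w4 sd) => [->|[->|[->|[->|->]]]]; rewrite /w1 /w2 /w3 /w4; lra.
have zmix : is_mixed z.
  split => //; have := zsum w1 w2 w3 w4 (fun _ => 1).
  under eq_bigr do rewrite mulr1.
  by move=> ->; rewrite !mulr1 /w1 /w2 /w3 /w4; field.
have dpos : forall t, 0 < F + dmg t :> R by move=> t; rewrite addr_gt0 // dmg_gt0.
set Q := \sum_(t : Trojan) (F + dmg t)^-1.
have Q0 : 0 < Q by rewrite /Q sumT4 !addr_gt0 // invr_gt0.
set paS := fun t : Trojan => (F + dmg t)^-1 / Q.
have paSmix : is_mixed paS.
  split; first by move=> t; rewrite /paS divr_ge0 // ltW // invr_gt0.
  by rewrite /paS -mulr_suml -/Q mulfV // gt_eqF.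
have K1S : forall sd, \sum_(t : Trojan) paS t * u_d F sd t = 0.
  move=> sd; rewrite (eq_bigr (fun t => Q^-1 * ((F + dmg t)^-1 * u_d F sd t))).
    by rewrite -mulr_sumr K1h mulr0.
  by move=> t _; rewrite /paS /= mulrAC mulrC.
split.
  exists F; split => //; split.
    exists z, paS; split => //.
      by move=> pd' _; rewrite /UEUT_d !L_d.
    by move=> pa' _; rewrite !UEUT_aE /UEUT_d !L_a.
  move=> pd pa [_ _ h3 h4].
  have u1 := h3 z zmix; have u2 := h4 paS paSmix.
  rewrite {1}/UEUT_d L_a // in u1.
  rewrite !UEUT_aE {1}/UEUT_d L_d // in u2.
  rewrite UEUT_aE.
  have -> : UEUT_d F pd pa = 0 by apply/eqP; rewrite eq_le u1 andbT -oppr_ge0 -oppr0.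
  by rewrite oppr0.
move=> ad aa had haa.
have r1h : forall t : Trojan, 0 <= (F + 1) / (F + dmg t) <= 1.
  move=> t; have dt := dpos t; apply/andP; split; first by apply: divr_ge0; [lra | exact: ltW].
  rewrite ler_pdivrMr // mul1r lerD2l.
  by move: t dt; apply: trojan_cases; rewrite /dmg /= => _; lra.
have r1e : exists i j : Trojan,
    [/\ i != j, (F + 1) / (F + dmg i) = 1 & 1/2 <= (F + 1) / (F + dmg j)].
  exists tA, tB; split.
  - by [].
  - by rewrite /dmg /= mulfV // gt_eqF //; lra.
  - rewrite /dmg /= ler_pdivlMr; last lra.
    lra.
have [pa [k1 [pamix [k1p wpa]]]] := @prelec_mix R ad Trojan _ had r1h r1e.
have r2h : forall sd : DefStrat, 0 <= z sd / w4 <= 1.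
  move=> sd; apply/andP; split; first by rewrite divr_ge0 // ?(zpos sd) // ltW.
  by rewrite ler_pdivrMr // mul1r zle.
have r2e : exists i j : DefStrat, [/\ i != j, z i / w4 = 1 & 1/2 <= z j / w4].
  exists PCD, PAD; split.
  - have /andP[/andP[/andP[/andP[/andP[_ _] n14] _] _] _] := Pneq.
    by rewrite eq_sym.
  - by rewrite /z zf_PCD mulfV // gt_eqF.
  - rewrite /z zf_PAD ler_pdivlMr //.
    rewrite /w1 /w4; lra.
have [pd [k2 [pdmix [k2p wpd]]]] := @prelec_mix R aa DefStrat _ haa r2h r2e.
have KD : forall sd, \sum_(t : Trojan) wPT ad (pa t) * u_d F sd t = 0.
  move=> sd; rewrite (eq_bigr (fun t => (k1 * (F + 1)) * ((F + dmg t)^-1 * u_d F sd t))).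
    by rewrite -mulr_sumr K1h mulr0.
  by move=> t _; rewrite wpa /=; ring.
have KA : forall t, \sum_(sd : DefStrat) wPT aa (pd sd) * u_d F sd t = 0.
  move=> t; rewrite (eq_bigr (fun sd => (k2 / w4) * (z sd * u_d F sd t))).
    by rewrite -mulr_sumr K2h mulr0.
  by move=> sd _; rewrite wpd /=; ring.
have E1 : forall pd', UPT_d ad F pd' pa = 0 by move=> pd'; rewrite /UPT_d L_d.
have E2 : forall pa', UPT_a aa F pd pa' = 0 by move=> pa'; rewrite /UPT_a L_a'.
exists F; split => //; exists pd, pa; split; last by rewrite E1 E2.
split => //; first by move=> pd' _; rewrite !E1.
by move=> pa' _; rewrite !E2.
Qed.
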